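(* If $C$ is a free $E$-linear code of length $2n$, then $LSHull(C)=SHull(C)$.
   Context: $E=\langle \kappa,\tau \mid 2\kappa=2\tau=0,\ \kappa^2=\kappa,\ \tau^2=\tau,\ \kappa\tau=\kappa,\ \tau\kappa=\tau\rangle$ is the non-unital ring $\{0,\kappa,\tau,\zeta\}$, $\zeta=\kappa+\tau$, with $e\kappa=e\tau=e$, $e\zeta=0$ for all $e\in E$. Every $e\in E$ is uniquely $u\kappa+v\zeta$ ($u,v\in\mathbb{F}_2$); $\pi(u\kappa+v\zeta)=u$, componentwise. An $E$-linear code of length $2n$ is a left $E$-submodule $C\subseteq E^{2n}$; $C_{Res}=\pi(C)$, $C_{Tor}=\{v\in\mathbb{F}_2^{2n}:\zeta v\in C\}$ (componentwise, $0\cdot\zeta=0,1\cdot\zeta=\zeta$); $C$ is free if $C_{Res}=C_{Tor}$. Symplectic inner product: $\langle (u|v),(u'|v')\rangle_s=\sum_i u_iv'_i+\sum_i v_iu'_i$. $C^{\perp_{S_L}}=\{z\in E^{2n}:\langle z,w\rangle_s=0\ \forall w\in C\}$, $C^{\perp_{S_R}}=\{z\in E^{2n}:\langle w,z\rangle_s=0\ \forall w\in C\}$, $C^{\perp_S}=C^{\perp_{S_L}}\cap C^{\perp_{S_R}}$, $LSHull(C)=C\cap C^{\perp_{S_L}}$, $SHull(C)=C\cap C^{\perp_S}$. *)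

(* Defs.v *)
From mathcomp Require Import all_boot.
Set Implicit Arguments. Unset Strict Implicit. Unset Printing Implicit Defensive.

(* The non-unital ring E = {0, kappa, tau, zeta}.  Every e in E is uniquely
   u*kappa + v*zeta with u v in F_2; we represent e by the pair (u, v). *)
Definition E := (bool * bool)%type.
Definition E0 : E := (false, false).
Definition kappa : E := (true, false).
Definition zeta : E := (false, true).
Definition tau : E := (true, true).   (* tau = kappa + zeta *)

Definition Eadd (a b : E) : E := (xorb a.1 b.1, xorb a.2 b.2).
Definition Epi (a : E) : bool := a.1.
(* Multiplication: e * kappa = e * tau = e, e * zeta = 0, extended
   bilinearly; hence a * b = pi(b) a. *)
Definition Emul (a b : E) : E := if Epi b then a else E0.

Lemma Emul_table :
  [/\ Emul kappa kappa = kappa, Emul tau tau = tau,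
      Emul kappa tau = kappa & Emul tau kappa = tau].
Proof. by []. Qed.

(* Words of length 2n, written (u | v) with u, v of length n. *)
Definition word (n : nat) := ({ffun 'I_n -> E} * {ffun 'I_n -> E})%type.
Definition bword (n : nat) := ({ffun 'I_n -> bool} * {ffun 'I_n -> bool})%type.

Definition wzero n : word n := ([ffun=> E0], [ffun=> E0]).
Definition wadd n (x y : word n) : word n :=
  ([ffun i => Eadd (x.1 i) (y.1 i)], [ffun i => Eadd (x.2 i) (y.2 i)]).
Definition wscale n (e : E) (x : word n) : word n :=
  ([ffun i => Emul e (x.1 i)], [ffun i => Emul e (x.2 i)]).

Definition E_linear n (C : {set word n}) : Prop :=
  [/\ wzero n \in C,
      (forall x y, x \in C -> y \in C -> wadd x y \in C) &
      (forall e x, x \in C -> wscale e x \in C)].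

Definition wpi n (x : word n) : bword n :=
  ([ffun i => Epi (x.1 i)], [ffun i => Epi (x.2 i)]).
Definition bzeta (b : bool) : E := if b then zeta else E0.
Definition wzeta n (v : bword n) : word n :=
  ([ffun i => bzeta (v.1 i)], [ffun i => bzeta (v.2 i)]).

Definition C_Res n (C : {set word n}) : {set bword n} := [set wpi x | x in C].
Definition C_Tor n (C : {set word n}) : {set bword n} :=
  [set v | wzeta v \in C].
Definition free_code n (C : {set word n}) : Prop := C_Res C = C_Tor C.

Definition Esum n (f : 'I_n -> E) : E := \big[Eadd/E0]_(i < n) f i.
Definition sip n (x y : word n) : E :=
  Eadd (Esum (fun i => Emul (x.1 i) (y.2 i)))
       (Esum (fun i => Emul (x.2 i) (y.1 i))).

Definition perp_SL n (C : {set word n}) : {set word n} :=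
  [set z | [forall w in C, sip z w == E0]].
Definition perp_SR n (C : {set word n}) : {set word n} :=
  [set z | [forall w in C, sip w z == E0]].
Definition perp_S n (C : {set word n}) : {set word n} :=
  perp_SL C :&: perp_SR C.

Definition LSHull n (C : {set word n}) : {set word n} := C :&: perp_SL C.
Definition SHull n (C : {set word n}) : {set word n} := C :&: perp_S C.

(* Main.v *)
Require Import Defs.
From mathcomp Require Import all_boot.
Set Implicit Arguments.

Lemma xorbC' (a b : bool) : xorb a b = xorb b a. Proof. by case: a; case: b. Qed.

Definition xs n (f : 'I_n -> bool) := \big[xorb/false]_(i < n) f i.

Lemma Esum1 n (f : 'I_n -> E) : (Esum f).1 = xs (fun i => (f i).1).
Proof. by rewrite /Esum /xs (@big_morph _ _ (fun e : E => e.1) false xorb E0 Eadd (fun a b => erefl) erefl). Qed.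
Lemma Esum2 n (f : 'I_n -> E) : (Esum f).2 = xs (fun i => (f i).2).
Proof. by rewrite /Esum /xs (@big_morph _ _ (fun e : E => e.2) false xorb E0 Eadd (fun a b => erefl) erefl). Qed.

Lemma sip1 n (x y : word n) : (sip x y).1 =
  xorb (xs (fun i => (x.1 i).1 && (y.2 i).1)) (xs (fun i => (x.2 i).1 && (y.1 i).1)).
Proof.
rewrite /sip /= !Esum1; congr xorb; apply: eq_bigr => i _;
  rewrite /Emul /Epi; by case: ifP; rewrite ?andbT ?andbF.
Qed.
Lemma sip2 n (x y : word n) : (sip x y).2 =
  xorb (xs (fun i => (x.1 i).2 && (y.2 i).1)) (xs (fun i => (x.2 i).2 && (y.1 i).1)).
Proof.
rewrite /sip /= !Esum2; congr xorb; apply: eq_bigr => i _;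
  rewrite /Emul /Epi; by case: ifP; rewrite ?andbT ?andbF.
Qed.

Theorem mainTheorem16 (n : nat) (C : {set word n}) :
  E_linear C -> free_code C -> LSHull C = SHull C.
Proof.
move=> [C0 Cadd Cscale] Hfree.
apply/setP => z; rewrite !inE.
case zC: (z \in C) => //=.
apply/idP/idP; last by case/andP.
move=> HL; rewrite HL /=.
apply/forall_inP => w wC.
have HLw : forall w', w' \in C -> sip z w' = E0.
  by move=> w' w'C; apply/eqP; exact: (forall_inP HL).
have h1 : (sip w z).1 = false.
  have e := congr1 fst (HLw w wC); rewrite sip1 /= in e; rewrite sip1 -[RHS]e.
  rewrite xorbC'; congr xorb; apply: eq_bigr => i _; exact: andbC.
set v : bword n := ([ffun i => (w.1 i).2], [ffun i => (w.2 i).2]).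
have vT : v \in C_Tor C.
  rewrite inE.
  have -> : wzeta v = wadd w (wscale kappa w).
    rewrite /wzeta /wadd /wscale /v; congr pair; apply/ffunP => i; rewrite !ffunE;
    rewrite /bzeta /Emul /Epi /Eadd; by case: (_ i) => [] [] [].
  by apply: Cadd => //; apply: Cscale.
rewrite -Hfree in vT; case/imsetP: vT => w' w'C vE.
have h2 : (sip w z).2 = false.
  have e := congr1 fst (HLw w' w'C); rewrite sip1 /= in e; rewrite sip2 -[RHS]e.
  have e1 : forall i, (w'.1 i).1 = (w.1 i).2.
    by move=> i; have := congr1 (fun p : bword n => p.1 i) vE; rewrite /= !ffunE => ->.
  have e2 : forall i, (w'.2 i).1 = (w.2 i).2.
    by move=> i; have := congr1 (fun p : bword n => p.2 i) vE; rewrite /= !ffunE => ->.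
  rewrite xorbC'; congr xorb; apply: eq_bigr => i _; by rewrite ?e1 ?e2 andbC.
by move: h1 h2; case: (sip w z) => [] [] [].
Qed.
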